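(* Let $\mathfrak{g}$ be a non-abelian real Lie algebra of even dimension $2n\ge4$, equipped with an orientation. Then there exists an almost complex structure $J$ on $\mathfrak{g}$ which is not tamed by any symplectic form on $\mathfrak{g}$.
   Context: The Chevalley–Eilenberg differential on forms on $\mathfrak{g}$ is defined on 1-forms by $d\alpha(u,v)=-\alpha([u,v])$ and extended by the Leibniz rule; a symplectic form is a closed non-degenerate 2-form. An almost complex structure is a linear map $J:\mathfrak{g}\to\mathfrak{g}$ with $J^2=-1$; it is tamed by a symplectic form $\omega$ if $\omega(u,Ju)>0$ for all $u\ne0$. *)

(* Defs.v *)
(* The Lie algebra g is modelled as the coordinate space
   'rV[R]_m (m = dim g) with a Lie bracket; R is an arbitrary real field
   (the reals being the case of interest). *)
From HB Require Import structures.
From mathcomp Require Import all_boot all_order all_algebra.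
Set Implicit Arguments. Unset Strict Implicit. Unset Printing Implicit Defensive.
Import Order.TTheory GRing.Theory Num.Theory.
Local Open Scope ring_scope.

Section LieDefs.
Variables (R : realFieldType) (m : nat).
Local Notation V := 'rV[R]_m.

Definition bilinear_vmap (f : V -> V -> V) : Prop :=
  (forall (a : R) (u v w : V), f (a *: u + v) w = a *: f u w + f v w) /\
  (forall (a : R) (u v w : V), f u (a *: v + w) = a *: f u v + f u w).

Definition is_lie_bracket (br : V -> V -> V) : Prop :=
  [/\ bilinear_vmap br,
      (forall u : V, br u u = 0) &
      (forall u v w : V, br u (br v w) + br v (br w u) + br w (br u v) = 0)].

Definition non_abelian (br : V -> V -> V) : Prop :=
  exists u v : V, br u v != 0.

Definition is_2form (w : V -> V -> R) : Prop :=
  [/\ (forall (a : R) (u v x : V), w (a *: u + v) x = a * w u x + w v x),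
      (forall (a : R) (u v x : V), w u (a *: v + x) = a * w u v + w u x) &
      (forall u : V, w u u = 0)].

(* Chevalley-Eilenberg differential of a 2-form: obtained from
   d alpha (u,v) = - alpha([u,v]) on 1-forms by the Leibniz rule. *)
Definition ce_d2 (br : V -> V -> V) (w : V -> V -> R) (x y z : V) : R :=
  - w (br x y) z - w (br y z) x - w (br z x) y.

Definition ce_closed (br : V -> V -> V) (w : V -> V -> R) : Prop :=
  forall x y z : V, ce_d2 br w x y z = 0.

Definition nondegenerate (w : V -> V -> R) : Prop :=
  forall u : V, (forall v : V, w u v = 0) -> u = 0.

Definition symplectic (br : V -> V -> V) (w : V -> V -> R) : Prop :=
  [/\ is_2form w, ce_closed br w & nondegenerate w].

(* almost complex structure: linear J (acting on row vectors u |-> u *m J)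
   with J^2 = -1 *)
Definition almost_complex (J : 'M[R]_m) : Prop := J *m J = - 1%:M.

Definition tamed_by (J : 'M[R]_m) (w : V -> V -> R) : Prop :=
  forall u : V, u != 0 -> 0 < w u (u *m J).

End LieDefs.

(* Main.v *)
Require Import Defs.
From HB Require Import structures.
From mathcomp Require Import all_boot all_order all_algebra.
From mathcomp Require Import zify ring lra.
Set Implicit Arguments. Unset Strict Implicit. Unset Printing Implicit Defensive.
Import Order.TTheory GRing.Theory Num.Theory.
Local Open Scope ring_scope.

Section Common.
Variables (R : realFieldType) (m : nat).
Definition ee (i : 'I_m) : 'rV[R]_m := delta_mx 0 i.
Definition wedge (a b : 'rV[R]_m) : 'M[R]_m := a^T *m b - b^T *m a.
Lemma wedgeE a b i j : wedge a b i j = a 0 i * b 0 j - b 0 i * a 0 j.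
Proof. by rewrite /wedge !mxE !big_ord1 !mxE. Qed.
Definition dot (a b : 'rV[R]_m) : R := \sum_k a 0 k * b 0 k.
End Common.
Arguments ee {R m} i.
Section Forms.
Variables (R : realFieldType) (m : nat).
Local Notation V := 'rV[R]_m.
Variable w : V -> V -> R.
Hypothesis hw : is_2form w.

Lemma w0l x : w 0 x = 0.
Proof.
case: hw => hl _ _; have := hl 1 0 0 x; rewrite scaler0 addr0 mul1r => h.
lra.
Qed.
Lemma wDl u v x : w (u + v) x = w u x + w v x.
Proof. by case: hw => hl _ _; rewrite -[u]scale1r hl mul1r scale1r. Qed.
Lemma wZl a u x : w (a *: u) x = a * w u x.
Proof. by case: hw => hl _ _; rewrite -[a *: u]addr0 hl w0l addr0. Qed.
Lemma w0r x : w x 0 = 0.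
Proof.
case: hw => _ hr _; have := hr 1 x 0 0; rewrite scaler0 addr0 mul1r => h.
lra.
Qed.
Lemma wDr u v x : w x (u + v) = w x u + w x v.
Proof. by case: hw => _ hr _; rewrite -[u]scale1r hr mul1r scale1r. Qed.
Lemma wZr a u x : w x (a *: u) = a * w x u.
Proof. by case: hw => _ hr _; rewrite -[a *: u]addr0 hr w0r addr0. Qed.
Lemma wC u v : w v u = - w u v.
Proof.
case: hw => _ _ ha; have := ha (u + v).
rewrite wDl !wDr !ha add0r addr0 => /eqP; rewrite addr_eq0 => /eqP ->; by rewrite opprK.
Qed.

Lemma w_suml I (r : seq I) (P : pred I) (F : I -> V) x :
  w (\sum_(i <- r | P i) F i) x = \sum_(i <- r | P i) w (F i) x.
Proof. by apply: (big_morph (fun u => w u x)) => [u v|]; rewrite ?wDl ?w0l. Qed.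
Lemma w_sumr I (r : seq I) (P : pred I) (F : I -> V) x :
  w x (\sum_(i <- r | P i) F i) = \sum_(i <- r | P i) w x (F i).
Proof. by apply: (big_morph (fun u => w x u)) => [u v|]; rewrite ?wDr ?w0r. Qed.



Lemma w_expand a b :
  w a b = \sum_i \sum_j a 0 i * b 0 j * w (ee i) (ee j).
Proof.
rewrite {1}(row_sum_delta a) w_suml; apply: eq_bigr => i _.
rewrite wZl {1}(row_sum_delta b) w_sumr mulr_sumr; apply: eq_bigr => j _.
by rewrite wZr /ee; ring.
Qed.

Definition pair (A : 'M[R]_m) : R := \sum_i \sum_j A i j * w (ee i) (ee j).





Lemma pair_wedge a b : pair (wedge a b) = 2 * w a b.
Proof.
have -> : 2 * w a b = w a b - w b a by rewrite (wC a b); ring.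
rewrite !w_expand -sumrB /pair; apply: eq_bigr => i _.
rewrite -sumrB; apply: eq_bigr => j _; rewrite wedgeE; ring.
Qed.

Lemma pairD A B : pair (A + B) = pair A + pair B.
Proof.
by rewrite /pair -big_split; apply: eq_bigr => i _;
   rewrite -big_split; apply: eq_bigr => j _; rewrite mxE mulrDl.
Qed.

Lemma pair_sum I (r : seq I) (P : pred I) (F : I -> 'M[R]_m) :
  pair (\sum_(k <- r | P k) F k) = \sum_(k <- r | P k) pair (F k).
Proof.
apply: (big_morph pair).
  by move=> A B; rewrite /pair -big_split; apply: eq_bigr => i _;
     rewrite -big_split; apply: eq_bigr => j _; rewrite mxE mulrDl.
by rewrite /pair big1 // => i _; rewrite big1 // => j _; rewrite mxE mul0r.
Qed.

End Forms.
Section Decomp.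
Variables (R : realFieldType) (m : nat).
Local Notation V := 'rV[R]_m.





Lemma dot_ee (a : V) i : dot a (ee i) = a 0 i.
Proof.
rewrite /dot (bigD1 i) //= big1 ?addr0; first by rewrite !mxE !eqxx mulr1.
by move=> k hk; rewrite !mxE (negbTE hk) andbF mulr0.
Qed.
Lemma dotD (a b c : V) : dot a (b + c) = dot a b + dot a c.
Proof. by rewrite /dot -big_split; apply: eq_bigr => k _; rewrite mxE mulrDr. Qed.
Lemma dotZ (a b : V) c : dot a (c *: b) = c * dot a b.
Proof. by rewrite /dot mulr_sumr; apply: eq_bigr => k _; rewrite mxE; ring. Qed.
Lemma dotN (a b : V) : dot a (- b) = - dot a b.
Proof. by rewrite -scaleN1r dotZ; ring. Qed.
Lemma dot0l (b : V) : dot 0 b = 0.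
Proof. by rewrite /dot big1 // => k _; rewrite mxE mul0r. Qed.

Definition nzr (A : 'M[R]_m) := [set i | row i A != 0].

Lemma skew_entry (A : 'M[R]_m) : A^T = - A -> forall i j, A j i = - A i j.
Proof. by move=> h i j; have := congr1 (fun M : 'M[R]_m => M i j) h; rewrite !mxE. Qed.
Lemma skew_diag (A : 'M[R]_m) : A^T = - A -> forall i, A i i = 0.
Proof. by move=> h i; have := skew_entry h i i; lra. Qed.

Lemma row0E (A : 'M[R]_m) i j : row i A = 0 -> A i j = 0.
Proof. by move=> h; have := congr1 (fun M : 'rV[R]_m => M 0 j) h; rewrite !mxE. Qed.

Lemma decomp (N : nat) : forall A : 'M[R]_m, A^T = - A -> (#|nzr A| <= N)%N ->
  exists r (s t u v : nat -> V),
   [/\ A = \sum_(k < r) wedge (s k) (t k),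
       (r.*2 <= #|nzr A|)%N,
       (forall k l, (k < r)%N -> (l < r)%N ->
          [/\ dot (s k) (u l) = (k == l)%:R, dot (t k) (u l) = 0,
              dot (s k) (v l) = 0 & dot (t k) (v l) = (k == l)%:R]) &
       (forall i k, row i A = 0 -> (k < r)%N -> s k 0 i = 0 /\ t k 0 i = 0)].
Proof.
elim: N => [|N IH] A skA hN.
  exists 0%N, (fun=> 0), (fun=> 0), (fun=> 0), (fun=> 0); split=> //.
  rewrite big_ord0; apply/matrixP=> i j; rewrite mxE.
  have : i \notin nzr A by apply/negP=> hi; move: hN; rewrite leqn0 => /eqP/cards0_eq hA;
    by move: hi; rewrite hA inE.
  by rewrite inE negbK => /eqP h; apply: row0E.
case: (boolP (A == 0)) => [/eqP A0|nzA].
  exists 0%N, (fun=> 0), (fun=> 0), (fun=> 0), (fun=> 0); split=> //.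
  by rewrite big_ord0.
have [i0 [j0 hij]] : exists i j, A i j != 0.
  case: (pickP (fun ij : 'I_m * 'I_m => A ij.1 ij.2 != 0)) => [[i j] /= h|h].
    by exists i, j.
  move: nzA; have -> : A = 0; last by rewrite eqxx.
  by apply/matrixP => i j; have := h (i, j); rewrite /= mxE => /negbFE/eqP.
pose lam := A i0 j0.
have lam0 : lam != 0 by [].
have Ai0 : A i0 i0 = 0 by apply: skew_diag.
have Aj0 : A j0 j0 = 0 by apply: skew_diag.
have Aji : A j0 i0 = - lam by apply: skew_entry.
pose s0 : V := lam^-1 *: row i0 A.
pose t0 : V := row j0 A.
have s0E k : s0 0 k = lam^-1 * A i0 k by rewrite !mxE.
have t0E k : t0 0 k = A j0 k by rewrite !mxE.
pose A' := A - wedge s0 t0.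
have A'E i j : A' i j = A i j - (lam^-1 * A i0 i * A j0 j - A j0 i * (lam^-1 * A i0 j)).
  by rewrite /A' [in LHS]mxE [X in _ + X]mxE wedgeE s0E t0E s0E t0E.
have skA' : A'^T = - A'.
  apply/matrixP => i j; rewrite [LHS]mxE [RHS]mxE !A'E (skew_entry skA i j).
  ring.
have r0 i : row i A = 0 -> row i A' = 0.
  move=> h; apply/rowP => j; rewrite [LHS]mxE [RHS]mxE A'E.
  have h1 k : A i k = 0 by apply: row0E h.
  rewrite (skew_entry skA i i0) (skew_entry skA i j0) !h1; ring.
have ri0 : row i0 A' = 0.
  apply/rowP => j; rewrite [LHS]mxE [RHS]mxE A'E Ai0 Aji; by field.
have rj0 : row j0 A' = 0.
  apply/rowP => j; rewrite [LHS]mxE [RHS]mxE A'E Aj0 -/lam; by field.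
have i0j0 : i0 != j0 by apply: contraNneq lam0 => e; rewrite /lam -e Ai0.
have inA i : row i A != 0 -> i \in nzr A by rewrite inE.
have i0in : i0 \in nzr A.
  apply: inA; apply/negP => /eqP h; move: lam0; by rewrite /lam (row0E j0 h) eqxx.
have j0in : j0 \in nzr A.
  apply: inA; apply/negP => /eqP h; move: lam0; by rewrite -oppr_eq0 -Aji (row0E i0 h) eqxx.
have hcard : (#|nzr A'| + 2 <= #|nzr A|)%N.
  have sub : nzr A' \subset nzr A :\: [set i0; j0].
    apply/subsetP => i; rewrite !inE => h.
    have ni0 : i != i0 by apply: contraNneq h => ->; rewrite ri0 eqxx.
    have nj0 : i != j0 by apply: contraNneq h => ->; rewrite rj0 eqxx.
    rewrite (negbTE ni0) (negbTE nj0) /=.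
    by apply: contraNneq h => /r0 ->.
  have s2 : [set i0; j0] \subset nzr A.
    apply/subsetP => i; rewrite !inE => /orP[] /eqP ->; [move: i0in | move: j0in]; by rewrite inE.
  have := subset_leq_card sub; rewrite cardsD (setIidPr s2) cards2 i0j0.
  have := subset_leq_card s2; rewrite cards2 i0j0.
  lia.
have [r [s [t [u [v [Asum hr hd hz]]]]]] := IH A' skA' ltac:(lia).
pose S k := if k is k1.+1 then s k1 else s0.
pose T k := if k is k1.+1 then t k1 else t0.
pose U l := if l is l1.+1 then u l1 - dot s0 (u l1) *: ee j0 + (lam^-1 * dot t0 (u l1)) *: ee i0
            else ee j0.
pose W l := if l is l1.+1 then v l1 - dot s0 (v l1) *: ee j0 + (lam^-1 * dot t0 (v l1)) *: ee i0
            else (- lam^-1) *: ee i0.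
have hzi k : (k < r)%N -> [/\ s k 0 i0 = 0, t k 0 i0 = 0, s k 0 j0 = 0 & t k 0 j0 = 0].
  by move=> hk; have [? ?] := hz _ _ ri0 hk; have [? ?] := hz _ _ rj0 hk.
exists r.+1, S, T, U, W; split.
- rewrite big_ord_recl /=.
  have -> : A = A' + wedge s0 t0 by rewrite /A' subrK.
  rewrite Asum addrC; congr (_ + _); apply: eq_bigr => k _; by rewrite lift0.
- by move: hr hcard; rewrite doubleS; lia.
- move=> [|k] [|l] hk hl /=.
  + rewrite !dotZ !dot_ee !s0E !t0E Ai0 Aj0 Aji -/lam; split; by field.
  + rewrite !dotD !dotN !dotZ !dot_ee !s0E !t0E Ai0 Aji Aj0 -/lam.
    split; by field.
  + have [h1 h2 h3 h4] := hzi k hk.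
    by rewrite !dotZ !dot_ee h1 h2 h3 h4 !mulr0.
  + have [h1 h2 h3 h4] := hzi k hk.
    have [e1 e2 e3 e4] := hd k l hk hl.
    by rewrite !dotD !dotN !dotZ !dot_ee h1 h2 h3 h4 !mulr0 subr0 !addr0 e1 e2 e3 e4 eqSS !subr0; split.
- move=> i [|k] hi hk /=.
  + have h1 k : A i k = 0 by apply: row0E hi.
    rewrite s0E t0E (skew_entry skA i i0) (skew_entry skA i j0) !h1; split; ring.
  + by apply: hz => //; apply: r0.
Qed.
End Decomp.
Section Comb.
Variables (R : realFieldType) (m : nat).
Local Notation V := 'rV[R]_m.




Lemma pick_other (i j k : 'I_m) : (3 < m)%N -> exists l : 'I_m, [&& l != i, l != j & l != k].
Proof.
move=> hm.
have : (0 < #|[predC mem [:: i; j; k]]|)%N.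
  have h1 := cardC (mem [:: i; j; k]); rewrite card_ord in h1.
  have h2 : (#|mem [:: i; j; k]| <= 3)%N := card_size _.
  move: h1 h2; set X := #|mem _|; set Y := #|_|; lia.
case/card_gt0P => l; rewrite !inE => /norP[h1 /norP[h2 h3]].
by exists l; rewrite h1 h2 h3.
Qed.

Variable br : V -> V -> V.
Hypothesis hbr : is_lie_bracket br.

Lemma br0l x : br 0 x = 0.
Proof.
case: hbr => [[hl _] _ _]; have := hl 1 0 0 x; rewrite scaler0 addr0 scale1r => h.
by have := congr1 (fun y => y - br 0 x) h; rewrite subrr addrK.
Qed.
Lemma brDl u v x : br (u + v) x = br u x + br v x.
Proof. by case: hbr => [[hl _] _ _]; rewrite -[u]scale1r hl !scale1r. Qed.
Lemma brZl a u x : br (a *: u) x = a *: br u x.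
Proof. by case: hbr => [[hl _] _ _]; rewrite -[a *: u]addr0 hl br0l addr0. Qed.
Lemma br0r x : br x 0 = 0.
Proof.
case: hbr => [[_ hr] _ _]; have := hr 1 x 0 0; rewrite scaler0 addr0 scale1r => h.
by have := congr1 (fun y => y - br x 0) h; rewrite subrr addrK.
Qed.
Lemma brDr u v x : br x (u + v) = br x u + br x v.
Proof. by case: hbr => [[_ hr] _ _]; rewrite -[u]scale1r hr !scale1r. Qed.
Lemma brZr a u x : br x (a *: u) = a *: br x u.
Proof. by case: hbr => [[_ hr] _ _]; rewrite -[a *: u]addr0 hr br0r addr0. Qed.
Lemma brC u v : br v u = - br u v.
Proof.
case: hbr => _ ha _; have := ha (u + v).
rewrite brDl !brDr !ha add0r addr0 => /eqP; rewrite addr_eq0 => /eqP ->; by rewrite opprK.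
Qed.
Lemma br_suml I (r : seq I) (P : pred I) (F : I -> V) x :
  br (\sum_(i <- r | P i) F i) x = \sum_(i <- r | P i) br (F i) x.
Proof. by apply: (big_morph (fun u => br u x)) => [u v|]; rewrite ?brDl ?br0l. Qed.
Lemma br_sumr I (r : seq I) (P : pred I) (F : I -> V) x :
  br x (\sum_(i <- r | P i) F i) = \sum_(i <- r | P i) br x (F i).
Proof. by apply: (big_morph (fun u => br x u)) => [u v|]; rewrite ?brDr ?br0r. Qed.

Lemma br_basis0 : (forall a b, br (ee a) (ee b) = 0) -> forall u v, br u v = 0.
Proof.
move=> h u v; rewrite (row_sum_delta u) br_suml big1 // => i _.
rewrite brZl (row_sum_delta v) br_sumr big1 ?scaler0 // => j _.
by rewrite brZr h scaler0.
Qed.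

Definition Tb x y z : 'M[R]_m := wedge (br x y) z + wedge (br y z) x + wedge (br z x) y.

Lemma TbE x y z p q : Tb x y z p q =
  wedge (br x y) z p q + wedge (br y z) x p q + wedge (br z x) y p q.
Proof. by rewrite /Tb !mxE. Qed.

Lemma ee0 (a b : 'I_m) : (ee a : V) 0 b = (a == b)%:R.
Proof. by rewrite /ee mxE eqxx eq_sym. Qed.

Lemma triple_nonzero : (3 < m)%N -> (exists u v, br u v != 0) ->
  exists x y z, Tb x y z != 0.
Proof.
move=> hm [u0 [v0 huv]].
case: (boolP [exists a, exists b, exists c, Tb (ee a) (ee b) (ee c) != 0]).
  by case/existsP => a /existsP [b /existsP [c h]]; exists (ee a), (ee b), (ee c).
rewrite negb_exists => /forallP H.
have H0 a b c p q : Tb (ee a) (ee b) (ee c) p q = 0.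
  have := H a; rewrite negb_exists => /forallP /(_ b); rewrite negb_exists => /forallP /(_ c).
  by rewrite negbK => /eqP ->; rewrite mxE.
pose Cf a b p := br (ee a) (ee b) 0 p.
have CfC a b p : Cf b a p = - Cf a b p by rewrite /Cf brC mxE.
have step1 a b p c : c != a -> c != b -> c != p ->
    Cf a b p = (a == p)%:R * Cf b c c + (b == p)%:R * Cf c a c.
  move=> ca cb cp; have := H0 a b c p c.
  rewrite TbE !wedgeE !ee0 eqxx (negbTE cp) (eq_sym a c) (negbTE ca) (eq_sym b c) (negbTE cb).
  rewrite -/(Cf a b p) -/(Cf b c p) -/(Cf c a p) -/(Cf b c c) -/(Cf c a c) -/(Cf a b c) /= !mulr0n !mulr1n.
  lra.
have step2 b c d : c != b -> d != b -> d != c -> Cf b c c = - Cf b d d.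
  move=> cb db dc; rewrite (step1 b c c d) // ?(eq_sym d c) //.
  by rewrite (eq_sym b c) (negbTE cb) eqxx (CfC b d d) /= mulr0n mulr1n mul0r add0r mul1r.
have step3 b c : c != b -> Cf b c c = 0.
  move=> cb; have [d /and3P [db dc _]] := pick_other b c c hm.
  have [e /and3P [eb ec ed]] := pick_other b c d hm.
  have h1 := step2 b c d cb db dc.
  have h2 := step2 b d e db eb ed.
  have h3 := step2 b c e cb eb ec.
  lra.
have step4 a b p : Cf a b p = 0.
  case: (eqVneq a b) => [->|ab].
    by rewrite /Cf; case: hbr => _ -> _; rewrite mxE.
  have [c /and3P [ca cb cp]] := pick_other a b p hm.
  rewrite (step1 a b p c) // (CfC a c c) (step3 b c cb) (step3 a c ca); ring.
move: huv; rewrite br_basis0 ?eqxx // => a b.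
by apply/rowP => p; rewrite mxE; apply: step4.
Qed.
End Comb.
Section MakeJ.
Variables (R : realFieldType) (n : nat).
Local Notation V := 'rV[R]_(n + n).

Lemma makeJ (r : nat) (s t u v : nat -> V) : (r <= n)%N ->
  (forall k l, (k < r)%N -> (l < r)%N ->
          [/\ dot (s k) (u l) = (k == l)%:R, dot (t k) (u l) = 0,
              dot (s k) (v l) = 0 & dot (t k) (v l) = (k == l)%:R]) ->
  exists J : 'M[R]_(n + n), J *m J = - 1%:M /\ forall k, (k < r)%N -> s k *m J = t k.
Proof.
move=> rn hd.
pose Ms : 'M[R]_(n, n + n) := \matrix_(k, j) (if (k < r)%N then s k 0 j else 0).
pose Mt : 'M[R]_(n, n + n) := \matrix_(k, j) (if (k < r)%N then t k 0 j else 0).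
pose Gu : 'M[R]_(n + n, n) := \matrix_(j, l) (if (l < r)%N then u l 0 j else 0).
pose Gv : 'M[R]_(n + n, n) := \matrix_(j, l) (if (l < r)%N then v l 0 j else 0).
pose Dr : 'M[R]_n := \matrix_(k, l) ((k == l) && (k < r)%N)%:R.
pose Fm := col_mx Ms Mt.
pose D : 'M[R]_(n + n) := block_mx Dr 0 0 Dr.
have prod (X : nat -> V) (Y : nat -> V) (c : nat -> nat -> R) :
    (forall k l, (k < r)%N -> (l < r)%N -> dot (X k) (Y l) = c k l) ->
    (\matrix_(k, j) (if (k < r)%N then X k 0 j else 0) : 'M[R]_(n, n + n)) *m
    (\matrix_(j, l) (if (l < r)%N then Y l 0 j else 0) : 'M[R]_(n + n, n)) =
    \matrix_(k, l) (if (k < r)%N && (l < r)%N then c k l else 0).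
  move=> hc; apply/matrixP => k l; rewrite !mxE.
  case hk: (k < r)%N; case hl: (l < r)%N => /=.
  - transitivity (dot (X k) (Y l)); last exact: hc.
    rewrite /dot; apply: eq_bigr => j _; by rewrite !mxE hk hl.
  - by rewrite big1 // => j _; rewrite !mxE hl mulr0.
  - by rewrite big1 // => j _; rewrite !mxE hk mul0r.
  - by rewrite big1 // => j _; rewrite !mxE hk mul0r.
have eDr : (\matrix_(k, l) (if (k < r)%N && (l < r)%N then (k == l :> nat)%:R else 0) : 'M[R]_n) = Dr.
  apply/matrixP => k l; rewrite !mxE; case: (eqVneq k l) => [->|kl].
    by rewrite !eqxx andbb; case: (l < r)%N.
  have : (k == l :> nat) = false by apply/negbTE.
  by move=> ->; rewrite andFb; case: ((k < r) && (l < r))%N.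
have e0 : (\matrix_(k, l) (if (k < r)%N && (l < r)%N then (0:R) else 0) : 'M[R]_n) = 0.
  by apply/matrixP => k l; rewrite !mxE; case: ((k < r) && (l < r))%N.
have FG : Fm *m row_mx Gu Gv = D.
  rewrite mul_col_row.
  rewrite (prod s u (fun k l => (k == l)%:R)); last by move=> k l hk hl; case: (hd k l hk hl).
  rewrite (prod s v (fun _ _ => 0)); last by move=> k l hk hl; case: (hd k l hk hl).
  rewrite (prod t u (fun _ _ => 0)); last by move=> k l hk hl; case: (hd k l hk hl).
  rewrite (prod t v (fun k l => (k == l)%:R)); last by move=> k l hk hl; case: (hd k l hk hl).
  by rewrite eDr e0.
have DrM (X : 'M[R]_(n, n + n)) : (forall (k : 'I_n) (j : 'I_(n + n)), (r <= k)%N -> X k j = 0) -> Dr *m X = X.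
  move=> hX; apply/matrixP => k j; rewrite !mxE (bigD1 k) //= big1.
    rewrite !mxE eqxx /=; case hk: (k < r)%N; first by rewrite mul1r addr0.
    by rewrite hX ?mul0r ?addr0 // leqNgt hk.
  by move=> l hl; rewrite !mxE eq_sym (negbTE hl) /= mul0r.
have DF : D *m Fm = Fm.
  rewrite mul_block_col !mul0mx addr0 add0r !DrM //.
    by move=> k j hk; rewrite mxE ltnNge hk.
  by move=> k j hk; rewrite mxE ltnNge hk.
have rk : \rank (D *m Fm) = \rank D.
  apply/eqP; rewrite eqn_leq mxrankM_maxl /=.
  rewrite DF -[X in (\rank X <= _)%N]FG; exact: mxrankM_maxl.
have [g gU hg] := complete_unitmx rk.
rewrite DF in hg.
pose J0 : 'M[R]_(n + n) := block_mx 0 1%:M (- 1%:M) 0.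
exists (invmx g *m J0 *m g); split.
  have -> : invmx g *m J0 *m g *m (invmx g *m J0 *m g) = invmx g *m (J0 *m J0) *m g.
    by rewrite !mulmxA -(mulmxA _ g) mulmxV // mulmx1.
  rewrite mulmx_block !mulmx0 !mul0mx !mulmx1 !mul1mx !addr0 !add0r.
  have -> : block_mx (- 1%:M) 0 0 (- 1%:M) = - (1%:M : 'M[R]_(n + n)).
    by rewrite (scalar_mx_block n n 1) opp_block_mx oppr0.
  by rewrite mulmxN mulNmx mulmx1 mulVmx.
move=> k hk.
have kn : (k < n)%N by apply: leq_trans hk rn.
pose k' := Ordinal kn.
have rowD (i : 'I_n) : (i < r)%N ->
    row (lshift n i) D = delta_mx 0 (lshift n i) /\ row (rshift n i) D = delta_mx 0 (rshift n i).
  move=> hi; rewrite /D block_mxEv rowKu rowKd !row_row_mx !row0 delta_mx_lshift delta_mx_rshift.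
  have -> : row i Dr = delta_mx 0 i.
    apply/rowP => j; rewrite !mxE eqxx /= hi andbT.
    by rewrite eq_sym.
  by [].
have [hl hr] := rowD k' hk.
have hs : delta_mx 0 (lshift n k') *m g = s k.
  rewrite -hl -row_mul -hg rowKu.
  by apply/rowP => j; rewrite !mxE hk.
have ht : delta_mx 0 (rshift n k') *m g = t k.
  rewrite -hr -row_mul -hg rowKd.
  by apply/rowP => j; rewrite !mxE hk.
rewrite -hs -ht !mulmxA -(mulmxA _ g) mulmxV // mulmx1 -rowE.
rewrite -[delta_mx 0 (lshift n k') *m J0]rowE /J0 block_mxEv rowKu row_row_mx row0.
by rewrite (rowE k' 1%:M) mulmx1 -delta_mx_rshift -rowE.
Qed.
End MakeJ.

Lemma wedge_tr (R : realFieldType) m (a b : 'rV[R]_m) : (wedge a b)^T = - wedge a b.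
Proof. by apply/matrixP => i j; rewrite [LHS]mxE [RHS]mxE !wedgeE; ring. Qed.

Lemma main (R : realFieldType) (n : nat) (hn : (2 <= n)%N)
  (br : 'rV[R]_(n + n) -> 'rV[R]_(n + n) -> 'rV[R]_(n + n))
  (hbr : is_lie_bracket br) (hna : non_abelian br) :
  exists J : 'M[R]_(n + n),
    almost_complex J /\
    (forall w : 'rV[R]_(n + n) -> 'rV[R]_(n + n) -> R,
        symplectic br w -> ~ tamed_by J w).
Proof.
have hm : (3 < n + n)%N by lia.
have [x [y [z hT]]] := triple_nonzero hbr hm hna.
set A := Tb br x y z in hT.
have skA : A^T = - A.
  by apply/matrixP => i j; rewrite [LHS]mxE [RHS]mxE /A !TbE !wedgeE; ring.
have hN : (#|nzr A| <= n + n)%N by rewrite -[X in (_ <= X)%N]card_ord max_card.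
have [r [s [t [u [v [Asum hr hd hz]]]]]] := decomp skA hN.
have r0 : (0 < r)%N.
  case: r Asum hr hd hz => // Asum _ _ _; move: hT; by rewrite Asum big_ord0 eqxx.
have rn : (r <= n)%N by move: hr hN; lia.
have [J [hJ hsJ]] := makeJ rn hd.
exists J; split => // w [h2 hcl _] htame.
have e1 : pair w A = 0.
  rewrite /A /Tb pairD pairD !pair_wedge //.
  have := hcl x y z; rewrite /ce_d2 => h; lra.
have e2 : pair w A = \sum_(k < r) 2 * w (s k) (t k).
  by rewrite Asum pair_sum; apply: eq_bigr => k _; rewrite pair_wedge.
have pos k : (k < r)%N -> 0 < w (s k) (t k).
  move=> hk; rewrite -(hsJ k hk); apply: htame.
  apply/negP => /eqP h0; have [h1 _ _ _] := hd k k hk hk.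
  by move: h1; rewrite h0 dot0l eqxx => /eqP; rewrite eq_sym oner_eq0.
have : 0 < \sum_(k < r) 2 * w (s k) (t k).
  case: r r0 rn Asum hr hd hz hsJ pos e2 => // r _ _ _ _ _ _ _ pos _.
  rewrite big_ord_recl; apply: ltr_pwDl.
    by apply: mulr_gt0 => //; apply: pos.
  by apply: sumr_ge0 => k _; apply: mulr_ge0 => //; apply: ltW; apply: pos.
by rewrite -e2 e1 ltxx.
Qed.

Theorem proposition4 (R : realFieldType) (n : nat) (hn : (2 <= n)%N)
  (br : 'rV[R]_(n.*2) -> 'rV[R]_(n.*2) -> 'rV[R]_(n.*2))
  (hbr : is_lie_bracket br) (hna : non_abelian br) :
  exists J : 'M[R]_(n.*2),
    almost_complex J /\
    (forall w : 'rV[R]_(n.*2) -> 'rV[R]_(n.*2) -> R,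
        symplectic br w -> ~ tamed_by J w).
Proof.
move: br hbr hna; rewrite -addnn => br hbr hna.
exact: main.
Qed.
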